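(* Let $R>1$, $\Omega=[-R,-1]\cup[1,R]\subset\mathbb{R}$, $h>0$, and for $x\in\mathbb{R}$ let $A_\Omega^{(h)}(x)=\int_\Omega\frac{h}{(y-x)^2+h^2}\,dy$. Then: (1) if $0<h<\sqrt{R+(R+1)\sqrt{R}}$, the maximizers of $A_\Omega^{(h)}$ over $\mathbb{R}$ are exactly the two points $$x_\pm=\pm\sqrt{\sqrt{R\left((R+1)^2+4h^2\right)}-(R+h^2)};$$ (2) if $h\ge\sqrt{R+(R+1)\sqrt{R}}$, then $x=0$ is the unique maximizer of $A_\Omega^{(h)}$ over $\mathbb{R}$. *)

(* Defs.v *)
From Stdlib Require Import Reals ClassicalEpsilon.
Open Scope R_scope.

(* Riemann integral of f over [a,b] as a total function: RiemannInt of
   (any) integrability witness when f is Riemann integrable on [a,b],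
   and 0 otherwise. RiemannInt does not depend on the witness
   (RiemannInt_P5). *)
Definition Rint (f : R -> R) (a b : R) : R :=
  match excluded_middle_informative (inhabited (Riemann_integrable f a b)) with
  | left H => RiemannInt (epsilon H (fun _ => True))
  | right _ => 0
  end.

Definition A_Omega (Rr h x : R) : R :=
  Rint (fun y => h / ((y - x) ^ 2 + h ^ 2)) (- Rr) (-1)
  + Rint (fun y => h / ((y - x) ^ 2 + h ^ 2)) 1 Rr.

Definition is_maximizer (f : R -> R) (x : R) : Prop :=
  forall y : R, f y <= f x.

(* Main.v *)
Require Import Defs.
From Stdlib Require Import Reals Lra Psatz FunctionalExtensionality ClassicalEpsilon.
Open Scope R_scope.

Lemma int_formula (x h a b : R) : 0 < h -> a <= b ->
  Rint (fun y => h / ((y - x) ^ 2 + h ^ 2)) a b = atan ((b - x) / h) - atan ((a - x) / h).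
Proof.
  intros hh hab.
  set (f := fun y => h / ((y - x) ^ 2 + h ^ 2)).
  set (G := fun y => atan ((y - x) / h)).
  assert (Hd : forall y, derivable_pt_lim G y (f y)).
  { intro y. unfold G, f.
    assert (H0 : derivable_pt_lim (id - fct_cte x)%F y (1 - 0)).
    { apply derivable_pt_lim_minus; [apply derivable_pt_lim_id | apply derivable_pt_lim_const]. }
    assert (H1 : derivable_pt_lim (fun y => (y - x) / h) y ((1 - 0) / h)).
    { apply (derivable_pt_lim_div_scal (id - fct_cte x)%F). exact H0. }
    assert (H2 := derivable_pt_lim_comp _ atan _ _ _ H1 (derivable_pt_lim_atan ((y - x) / h))).
    replace (h / ((y - x) ^ 2 + h ^ 2)) with (/ (1 + ((y - x) / h) ^ 2) * ((1 - 0) / h)).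
    exact H2.
    assert (0 < (y - x) ^ 2 + h ^ 2) by (assert (0 <= (y-x)^2) by (apply pow2_ge_0); assert (0 < h^2) by (apply pow_lt; lra); lra).
    field_simplify_eq; lra. }
  assert (Hcont : continuity f).
  { intro y. unfold f.
    assert (P : 0 < (y - x) ^ 2 + h ^ 2) by (assert (0 <= (y-x)^2) by (apply pow2_ge_0); assert (0 < h^2) by (apply pow_lt; lra); lra).
    change (continuity_pt (div_fct (fct_cte h) (fun y => (y - x) ^ 2 + h ^ 2)) y).
    apply continuity_pt_div.
    - apply continuity_pt_const. intros u v; reflexivity.
    - change (continuity_pt (plus_fct (fun y => (y - x) ^ 2) (fct_cte (h ^ 2))) y).
      apply continuity_pt_plus.
      + change (continuity_pt (comp (fun u => u ^ 2) (minus_fct id (fct_cte x))) y).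
        apply continuity_pt_comp.
        * apply continuity_pt_minus. apply derivable_continuous_pt, derivable_pt_id.
          apply continuity_pt_const. intros u v; reflexivity.
        * apply derivable_continuous_pt, derivable_pt_pow.
      + apply continuity_pt_const. intros u v; reflexivity.
    - lra. }
  assert (Hint : Riemann_integrable f a b).
  { apply continuity_implies_RiemannInt; auto. }
  set (dG := fun y => exist (fun l => derivable_pt_lim G y l) (f y) (Hd y) : derivable_pt G y).
  assert (Heq : derive G dG = f).
  { apply functional_extensionality; intro y. unfold derive. reflexivity. }
  assert (Hc1 : continuity (derive G dG)) by (rewrite Heq; exact Hcont).
  set (C := @mkC1 G dG Hc1).
  assert (E : forall pr : Riemann_integrable (derive G dG) a b, RiemannInt pr = G b - G a).
  { intro pr. exact (@FTC_Riemann C a b pr). }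
  rewrite Heq in E.
  unfold Rint. fold f.
  destruct (excluded_middle_informative (inhabited (Riemann_integrable f a b))) as [Hi|Hn].
  - apply E.
  - exfalso; apply Hn; constructor; exact Hint.
Qed.

Definition T (h c x : R) := atan ((c - x) / h).
Definition F (Rr h x : R) := T h (-1) x - T h (- Rr) x + (T h Rr x - T h 1 x).
Definition g (h c x : R) := h / ((c - x) ^ 2 + h ^ 2).
Definition dF (Rr h x : R) := - g h (-1) x + g h (- Rr) x + (- g h Rr x + g h 1 x).

Lemma A_eq (Rr h x : R) : 1 < Rr -> 0 < h -> A_Omega Rr h x = F Rr h x.
Proof.
  intros hR hh. unfold A_Omega, F, T.
  rewrite !int_formula by lra. ring.
Qed.

Lemma F_even (Rr h x : R) : 0 < h -> F Rr h (- x) = F Rr h x.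
Proof.
  intros hh. unfold F, T.
  replace ((-1 - - x) / h) with (- ((1 - x) / h)) by (field; lra).
  replace ((- Rr - - x) / h) with (- ((Rr - x) / h)) by (field; lra).
  replace ((Rr - - x) / h) with (- ((- Rr - x) / h)) by (field; lra).
  replace ((1 - - x) / h) with (- ((-1 - x) / h)) by (field; lra).
  rewrite !atan_opp. ring.
Qed.

Lemma pos_den (h c x : R) : 0 < h -> 0 < (c - x) ^ 2 + h ^ 2.
Proof.
  intros hh. assert (0 <= (c-x)^2) by (apply pow2_ge_0).
  assert (0 < h^2) by (apply pow_lt; lra). lra.
Qed.

Lemma T_deriv (h c x : R) : 0 < h -> derivable_pt_lim (T h c) x (- g h c x).
Proof.
  intros hh. unfold T, g.
  assert (H0 : derivable_pt_lim (fct_cte c - id)%F x (0 - 1)).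
  { apply derivable_pt_lim_minus; [apply derivable_pt_lim_const | apply derivable_pt_lim_id]. }
  assert (H1 : derivable_pt_lim (fun y => (c - y) / h) x ((0 - 1) / h)).
  { apply (derivable_pt_lim_div_scal (fct_cte c - id)%F). exact H0. }
  assert (H2 := derivable_pt_lim_comp _ atan _ _ _ H1 (derivable_pt_lim_atan ((c - x) / h))).
  replace (- (h / ((c - x) ^ 2 + h ^ 2))) with (/ (1 + ((c - x) / h) ^ 2) * ((0 - 1) / h)).
  exact H2.
  assert (P := pos_den h c x hh).
  field_simplify_eq; lra.
Qed.

Lemma F_deriv (Rr h x : R) : 0 < h -> derivable_pt_lim (F Rr h) x (dF Rr h x).
Proof.
  intros hh.
  replace (dF Rr h x) with ((- g h (-1) x - - g h (- Rr) x) + (- g h Rr x - - g h 1 x)) by (unfold dF; ring).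
  change (derivable_pt_lim (plus_fct (minus_fct (T h (-1)) (T h (- Rr))) (minus_fct (T h Rr) (T h 1))) x
     ((- g h (-1) x - - g h (- Rr) x) + (- g h Rr x - - g h 1 x))).
  apply derivable_pt_lim_plus; apply derivable_pt_lim_minus; apply T_deriv; exact hh.
Qed.

Lemma dF_factor (Rr h x S : R) : 1 < Rr -> 0 < h -> S * S = Rr * ((Rr + 1) ^ 2 + 4 * h ^ 2) -> 0 <= S ->
  exists K, 0 < K /\ dF Rr h x = K * x * ((S - (Rr + h ^ 2)) - x ^ 2).
Proof.
  intros hR hh HS S0.
  assert (P1 := pos_den h (-1) x hh).
  assert (P2 := pos_den h (- Rr) x hh).
  assert (P3 := pos_den h Rr x hh).
  assert (P4 := pos_den h 1 x hh).
  assert (Px : 0 <= x ^ 2) by apply pow2_ge_0.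
  assert (Ph : 0 < h ^ 2) by (apply pow_lt; lra).
  set (P := ((-1 - x) ^ 2 + h ^ 2) * ((- Rr - x) ^ 2 + h ^ 2) * ((Rr - x) ^ 2 + h ^ 2) * ((1 - x) ^ 2 + h ^ 2)).
  assert (PP : 0 < P) by (unfold P; repeat apply Rmult_lt_0_compat; lra).
  exists (4 * h * (Rr - 1) * (x ^ 2 + S + Rr + h ^ 2) / P). split.
  - apply Rdiv_lt_0_compat; [|exact PP]. repeat apply Rmult_lt_0_compat; lra.
  - set (u := x ^ 2).
    set (Q := - u * u - 2 * u * (h ^ 2 + Rr) + (Rr ^ 3 + Rr * Rr + Rr + 2 * Rr * h ^ 2 - h ^ 4)).
    assert (HQ : Q = (S - (Rr + h ^ 2) - u) * (u + S + Rr + h ^ 2)).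
    { transitivity (S * S - (Rr + h ^ 2 + u) ^ 2); [|ring]. rewrite HS. unfold Q. ring. }
    transitivity (4 * h * (Rr - 1) * x * Q / P).
    + unfold dF, g, Q, u, P. field. repeat split; lra.
    + rewrite HQ. unfold u. field. lra.
Qed.

Lemma F_inc (Rr h a b : R) : 0 < h -> a < b -> (forall c, a < c < b -> 0 < dF Rr h c) -> F Rr h a < F Rr h b.
Proof.
  intros hh hab Hc.
  destruct (MVT_cor2 (F Rr h) (dF Rr h) a b hab (fun c _ => F_deriv Rr h c hh)) as [c [E Hc']].
  assert (0 < dF Rr h c * (b - a)) by (apply Rmult_lt_0_compat; [apply Hc; exact Hc' | lra]).
  lra.
Qed.

Lemma F_dec (Rr h a b : R) : 0 < h -> a < b -> (forall c, a < c < b -> dF Rr h c < 0) -> F Rr h b < F Rr h a.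
Proof.
  intros hh hab Hc.
  destruct (MVT_cor2 (F Rr h) (dF Rr h) a b hab (fun c _ => F_deriv Rr h c hh)) as [c [E Hc']].
  assert (0 < - dF Rr h c * (b - a)) by (apply Rmult_lt_0_compat; [assert (dF Rr h c < 0) by (apply Hc; exact Hc'); lra | lra]).
  lra.
Qed.

Theorem mainTheorem8 (Rr h : R) (hR : 1 < Rr) (hh : 0 < h) :
  (h < sqrt (Rr + (Rr + 1) * sqrt Rr) ->
     forall x : R, is_maximizer (A_Omega Rr h) x <->
       (x = sqrt (sqrt (Rr * ((Rr + 1) ^ 2 + 4 * h ^ 2)) - (Rr + h ^ 2)) \/
        x = - sqrt (sqrt (Rr * ((Rr + 1) ^ 2 + 4 * h ^ 2)) - (Rr + h ^ 2))))
  /\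
  (sqrt (Rr + (Rr + 1) * sqrt Rr) <= h ->
     forall x : R, is_maximizer (A_Omega Rr h) x <-> x = 0).
Proof.
  assert (HA : A_Omega Rr h = F Rr h).
  { apply functional_extensionality; intro y; apply A_eq; assumption. }
  unfold is_maximizer; rewrite HA.
  set (S := sqrt (Rr * ((Rr + 1) ^ 2 + 4 * h ^ 2))).
  assert (Ph : 0 < h ^ 2) by (apply pow_lt; lra).
  assert (HS : S * S = Rr * ((Rr + 1) ^ 2 + 4 * h ^ 2)).
  { apply sqrt_sqrt. apply Rmult_le_pos; [lra|]. assert (0 <= (Rr+1)^2) by apply pow2_ge_0. lra. }
  assert (S0 : 0 <= S) by apply sqrt_pos.
  set (t := sqrt Rr).
  assert (Ht : t * t = Rr) by (apply sqrt_sqrt; lra).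
  assert (t0 : 0 <= t) by apply sqrt_pos.
  assert (t1 : 1 < t) by nra.
  set (a := Rr + (Rr + 1) * t).
  assert (a0 : 0 < a) by (unfold a; nra).
  assert (Ha : sqrt a * sqrt a = a) by (apply sqrt_sqrt; lra).
  assert (sa0 : 0 <= sqrt a) by apply sqrt_pos.
  set (us := S - (Rr + h ^ 2)).
  assert (Hsign : forall c, exists K, 0 < K /\ dF Rr h c = K * c * (us - c ^ 2)).
  { intro c. apply dF_factor; assumption. }
  split.
  - intro Hlt.
    assert (hha : h ^ 2 < a) by nra.
    assert (us0 : 0 < us).
    { unfold us.
      assert (E : S * S - (Rr + h ^ 2) ^ 2 = ((Rr + 1) * t - (h ^ 2 - Rr)) * ((Rr + 1) * t + (h ^ 2 - Rr))).
      { rewrite HS. rewrite <- Ht. ring. }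
      assert (0 < ((Rr + 1) * t - (h ^ 2 - Rr)) * ((Rr + 1) * t + (h ^ 2 - Rr))).
      { apply Rmult_lt_0_compat; unfold a in hha; nra. }
      nra. }
    set (p := sqrt us).
    assert (Hp : p * p = us) by (apply sqrt_sqrt; lra).
    assert (p0 : 0 < p) by (apply sqrt_lt_R0; lra).
    fold p.
    assert (Pos : forall y, 0 <= y -> y <> p -> F Rr h y < F Rr h p).
    { intros y y0 yp. destruct (Rlt_or_le y p) as [ylt|yge].
      - apply F_inc; [lra|lra|]. intros c Hc.
        destruct (Hsign c) as [K [K0 E]]. rewrite E.
        assert (0 < us - c ^ 2) by nra.
        apply Rmult_lt_0_compat; [apply Rmult_lt_0_compat; lra|lra].
      - apply F_dec; [lra|lra|]. intros c Hc.
        destruct (Hsign c) as [K [K0 E]]. rewrite E.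
        assert (us - c ^ 2 < 0) by nra.
        assert (0 < K * c) by (apply Rmult_lt_0_compat; lra).
        nra. }
    assert (All : forall y, y <> p -> y <> - p -> F Rr h y < F Rr h p).
    { intros y y1 y2. destruct (Rle_or_lt 0 y) as [y0|y0].
      - apply Pos; assumption.
      - rewrite <- (F_even Rr h y hh). apply Pos; lra. }
    intro x. split.
    + intro Hm. destruct (Req_dec x p) as [E|E]; [left; exact E|].
      destruct (Req_dec x (- p)) as [E'|E']; [right; exact E'|].
      exfalso. specialize (Hm p). assert (Hx := All x E E'). lra.
    + intros Hx y.
      assert (Fm : F Rr h (- p) = F Rr h p) by (apply F_even; lra).
      assert (Fx : F Rr h x = F Rr h p) by (destruct Hx as [-> | ->]; [reflexivity | exact Fm]).
      rewrite Fx.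
      destruct (Req_dec y p) as [->|E]; [lra|].
      destruct (Req_dec y (- p)) as [->|E']; [lra|].
      left; apply All; assumption.
  - intro Hge.
    assert (hha : a <= h ^ 2) by nra.
    assert (us0 : us <= 0).
    { unfold us.
      assert (E : S * S - (Rr + h ^ 2) ^ 2 = ((Rr + 1) * t - (h ^ 2 - Rr)) * ((Rr + 1) * t + (h ^ 2 - Rr))).
      { rewrite HS. rewrite <- Ht. ring. }
      assert (((Rr + 1) * t - (h ^ 2 - Rr)) * ((Rr + 1) * t + (h ^ 2 - Rr)) <= 0).
      { unfold a in hha.
        assert (f1 : (Rr + 1) * t - (h ^ 2 - Rr) <= 0) by lra.
        assert (f2 : 0 <= (Rr + 1) * t + (h ^ 2 - Rr)) by nra.
        nra. }
      nra. }
    assert (All : forall y, y <> 0 -> F Rr h y < F Rr h 0).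
    { intros y y0. destruct (Rlt_or_le 0 y) as [yp|yn].
      - apply F_dec; [lra|lra|]. intros c Hc.
        destruct (Hsign c) as [K [K0 E]]. rewrite E.
        assert (us - c ^ 2 < 0) by nra.
        assert (0 < K * c) by (apply Rmult_lt_0_compat; lra).
        nra.
      - apply F_inc; [lra|lra|]. intros c Hc.
        destruct (Hsign c) as [K [K0 E]]. rewrite E.
        assert (us - c ^ 2 < 0) by nra.
        assert (K * c < 0) by nra.
        nra. }
    intro x. split.
    + intro Hm. destruct (Req_dec x 0) as [E|E]; [exact E|].
      exfalso. specialize (Hm 0). assert (Hx := All x E). lra.
    + intros -> y. destruct (Req_dec y 0) as [->|E]; [lra|].
      left; apply All; assumption.
Qed.
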